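(* Let $\alpha(s)$ be an arc-length parametrized curve in $\mathbb{R}^3$ whose curvature $\kappa(s)$ is nonconstant (and nonvanishing) and satisfies $$5(\kappa')^2=c_2-\frac{2c_1}{\kappa}+\kappa^4$$ for some real constants $c_1,c_2$, and whose torsion $\tau(s)$ is nonconstant and satisfies $$\kappa^{(4)}-15\kappa(\kappa')^2-10\kappa^2\kappa''+\kappa^5-\tau^2\left(\kappa''-2\kappa^3\right)=0.$$ Let $N(s)$ be the principal unit normal of $\alpha$ and let $S$ be the ruled surface in $\mathbb{R}^3$ locally parametrized by $x(s,t)=\alpha(s)+tN(s)$, with the induced metric. Then $\alpha(s)$ is a triharmonic curve in $S$ with nonconstant geodesic curvature $\kappa_g(s)=\kappa(s)$.
   Context: An arc-length parametrized curve $\gamma$ in a Riemannian manifold $M$ with Levi-Civita connection $\nabla$, curvature tensor $R^M(X,Y)=\nabla_X\nabla_Y-\nabla_Y\nabla_X-\nabla_{[X,Y]}$ and $T=\gamma'$ is called triharmonic if $\nabla_T^5T+R^M(\nabla_T^3T,T)T-R^M(\nabla_T^2T,\nabla_TT)T=0$. For a curve in a surface, the geodesic curvature $\kappa_g$ is defined by $\nabla_TT=\kappa_g\,JT$, with $J$ the rotation by $\pi/2$ (the orientation of $S$ being chosen appropriately). The curvature and torsion of a curve in $\mathbb{R}^3$ are those of its Frenet frame $T=\alpha'$, $N=\alpha''/\kappa$, $B=T\times N$. *)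

(* Defs.v *)
From Stdlib Require Import Reals.
From Coquelicot Require Import Coquelicot.
Open Scope R_scope.

Record vec3 := mkv { vx : R; vy : R; vz : R }.

Definition vadd (a b : vec3) : vec3 := mkv (vx a + vx b) (vy a + vy b) (vz a + vz b).
Definition vscal (r : R) (a : vec3) : vec3 := mkv (r * vx a) (r * vy a) (r * vz a).
Definition dot (a b : vec3) : R := vx a * vx b + vy a * vy b + vz a * vz b.
Definition cross (a b : vec3) : vec3 :=
  mkv (vy a * vz b - vz a * vy b) (vz a * vx b - vx a * vz b) (vx a * vy b - vy a * vx b).
Definition vnorm (a : vec3) : R := sqrt (dot a a).

Definition dvec (f : R -> vec3) (s : R) : vec3 :=
  mkv (Derive (fun t => vx (f t)) s) (Derive (fun t => vy (f t)) s)
      (Derive (fun t => vz (f t)) s).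

Fixpoint dvec_n (n : nat) (f : R -> vec3) : R -> vec3 :=
  match n with O => f | S k => dvec (dvec_n k f) end.

Definition in_I (a b : Rbar) (s : R) : Prop := Rbar_lt a s /\ Rbar_lt s b.

Definition smooth_on (a b : Rbar) (f : R -> vec3) : Prop :=
  forall (n : nat) (s : R), in_I a b s ->
    ex_derive (fun t => vx (dvec_n n f t)) s /\
    ex_derive (fun t => vy (dvec_n n f t)) s /\
    ex_derive (fun t => vz (dvec_n n f t)) s.

Definition Tan (al : R -> vec3) (s : R) : vec3 := dvec al s.
Definition kappa (al : R -> vec3) (s : R) : R := vnorm (dvec_n 2 al s).
Definition Nrm (al : R -> vec3) (s : R) : vec3 := vscal (/ kappa al s) (dvec_n 2 al s).
Definition Bin (al : R -> vec3) (s : R) : vec3 := cross (Tan al s) (Nrm al s).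
(** torsion : N' = -kappa T + tau B *)
Definition tau (al : R -> vec3) (s : R) : R := dot (dvec (Nrm al) s) (Bin al s).

Definition ruled (al : R -> vec3) (s t : R) : vec3 := vadd (al s) (vscal t (Nrm al s)).

Inductive idx := i1 | i2.
Definition sum2 (f : idx -> R) : R := f i1 + f i2.

Definition pd (X : R -> R -> vec3) (i : idx) (u v : R) : vec3 :=
  match i with
  | i1 => dvec (fun u' => X u' v) u
  | i2 => dvec (fun v' => X u v') v
  end.

Definition dpart (i : idx) (f : R -> R -> R) (u v : R) : R :=
  match i with
  | i1 => Derive (fun u' => f u' v) u
  | i2 => Derive (fun v' => f u v') v
  end.

Definition gmet (X : R -> R -> vec3) (i j : idx) (u v : R) : R := dot (pd X i u v) (pd X j u v).
Definition detg (X : R -> R -> vec3) (u v : R) : R :=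
  gmet X i1 i1 u v * gmet X i2 i2 u v - gmet X i1 i2 u v * gmet X i2 i1 u v.
Definition ginv (X : R -> R -> vec3) (k l : idx) (u v : R) : R :=
  match k, l with
  | i1, i1 => gmet X i2 i2 u v / detg X u v
  | i2, i2 => gmet X i1 i1 u v / detg X u v
  | i1, i2 => - gmet X i1 i2 u v / detg X u v
  | i2, i1 => - gmet X i2 i1 u v / detg X u v
  end.

(** Christoffel symbols of the Levi-Civita connection: nabla_{d_i} d_j = Gamma^k_ij d_k *)
Definition Gamma (X : R -> R -> vec3) (k i j : idx) (u v : R) : R :=
  / 2 * sum2 (fun l => ginv X k l u v *
     (dpart i (gmet X j l) u v + dpart j (gmet X i l) u v - dpart l (gmet X i j) u v)).

(** Riemann tensor, R(d_i,d_j)d_k = Riem^l_{ijk} d_l, with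
    R(X,Y) = nabla_X nabla_Y - nabla_Y nabla_X - nabla_[X,Y] *)
Definition Riem (X : R -> R -> vec3) (l i j k : idx) (u v : R) : R :=
  dpart i (Gamma X l j k) u v - dpart j (Gamma X l i k) u v
  + sum2 (fun m => Gamma X m j k u v * Gamma X l i m u v - Gamma X m i k u v * Gamma X l j m u v).

(** * Curves in the surface, in coordinates c = (c^1, c^2), and vector fields
      along them given by their components V^k in the coordinate frame *)
Definition vfield := idx -> R -> R.

Definition ctangent (c : vfield) : vfield := fun i s => Derive (c i) s.

Definition covD (X : R -> R -> vec3) (c : vfield) (V : vfield) : vfield :=
  fun k s => Derive (V k) s +
    sum2 (fun i => sum2 (fun j =>
      Gamma X k i j (c i1 s) (c i2 s) * Derive (c i) s * V j s)).

Fixpoint covD_n (X : R -> R -> vec3) (c : vfield) (n : nat) (V : vfield) : vfield :=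
  match n with O => V | S m => covD X c (covD_n X c m V) end.

Definition Rcurv (X : R -> R -> vec3) (c : vfield) (A B C : vfield) : vfield :=
  fun l s => sum2 (fun i => sum2 (fun j => sum2 (fun k =>
    Riem X l i j k (c i1 s) (c i2 s) * A i s * B j s * C k s))).

Definition triharmonic_on (X : R -> R -> vec3) (c : vfield) (a b : Rbar) : Prop :=
  let T := ctangent c in
  forall s, in_I a b s -> forall l : idx,
    covD_n X c 5 T l s + Rcurv X c (covD_n X c 3 T) T T l s
    - Rcurv X c (covD_n X c 2 T) (covD_n X c 1 T) T l s = 0.

Definition amb (X : R -> R -> vec3) (c : vfield) (V : vfield) (s : R) : vec3 :=
  vadd (vscal (V i1 s) (pd X i1 (c i1 s) (c i2 s)))
       (vscal (V i2 s) (pd X i2 (c i1 s) (c i2 s))).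

(** unit normal of the surface; J w = nS x w is rotation by pi/2 in the tangent plane *)
Definition nS (X : R -> R -> vec3) (u v : R) : vec3 :=
  vscal (/ vnorm (cross (pd X i1 u v) (pd X i2 u v))) (cross (pd X i1 u v) (pd X i2 u v)).

Definition Jrot (X : R -> R -> vec3) (c : vfield) (w : vec3) (s : R) : vec3 :=
  cross (nS X (c i1 s) (c i2 s)) w.

(** the coordinate curve s |-> (s, 0), i.e. alpha inside S *)
Definition curve_s0 : vfield := fun i s => match i with i1 => s | i2 => 0 end.

(* Main.v *)
Require Import Defs.
From Stdlib Require Import Reals Lra Lia Classical.
From Coquelicot Require Import Coquelicot.
Open Scope R_scope.

Ltac eta_fix := repeat match goal with |- context [Derive (fun x => ?f x)] => change (fun x => f x) with f end.

Lemma I_loc a b s : in_I a b s -> locally s (in_I a b).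
Proof.
  intros [H1 H2].
  generalize (open_Rbar_gt a s H1) (open_Rbar_lt b s H2). intros L1 L2.
  apply (filter_and _ _ L1 L2).
Qed.

Fixpoint Ck (a b : Rbar) (n : nat) (f : R -> R) : Prop :=
  match n with
  | O => True
  | S m => (forall s, in_I a b s -> ex_derive f s) /\ Ck a b m (Derive f)
  end.

Lemma loc_eq a b (f g : R -> R) s : (forall s, in_I a b s -> f s = g s) -> in_I a b s ->
  locally s (fun t => f t = g t).
Proof. intros H Hs. generalize (I_loc a b s Hs). apply filter_imp. auto. Qed.

Lemma Ck_ext a b n : forall f g, (forall s, in_I a b s -> f s = g s) -> Ck a b n f -> Ck a b n g.
Proof.
  induction n as [|n IH]; simpl; auto.
  intros f g H [H1 H2]; split.
  - intros s Hs. apply (ex_derive_ext_loc f); auto. apply (loc_eq a b); auto.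
  - apply (IH (Derive f)); auto. intros s Hs. apply Derive_ext_loc. apply (loc_eq a b); auto.
Qed.

Lemma Ck_S a b n f : Ck a b (S n) f -> Ck a b n f.
Proof.
  revert f; induction n as [|n IH]; simpl; auto.
  intros f [H1 [H2 H3]]. split; auto. apply IH. simpl. auto.
Qed.

Lemma Ck_le a b n m f : (m <= n)%nat -> Ck a b n f -> Ck a b m f.
Proof. induction 1; auto. intros H0. apply IHle. apply Ck_S; auto. Qed.

Lemma Ck_ex a b n f s : Ck a b (S n) f -> in_I a b s -> ex_derive f s.
Proof. intros [H _]; auto. Qed.

Lemma Ck_D a b n f : Ck a b (S n) f -> Ck a b n (Derive f).
Proof. intros [_ H]; auto. Qed.

Lemma Ck_const a b n c : Ck a b n (fun _ => c).
Proof.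
  revert c; induction n as [|n IH]; simpl; auto.
  intros c; split. intros; auto_derive; auto.
  apply (Ck_ext a b n (fun _ => 0)). intros s _. rewrite Derive_const; auto. apply IH.
Qed.

Lemma Ck_plus a b n : forall f g, Ck a b n f -> Ck a b n g -> Ck a b n (fun s => f s + g s).
Proof.
  induction n as [|n IH]; simpl; auto.
  intros f g [F1 F2] [G1 G2]; split.
  - intros s Hs; auto_derive; auto.
  - apply (Ck_ext a b n (fun s => Derive f s + Derive g s)); auto.
    intros s Hs. symmetry. apply is_derive_unique. auto_derive. auto. eta_fix; ring.
Qed.

Lemma Ck_opp a b n : forall f, Ck a b n f -> Ck a b n (fun s => - f s).
Proof.
  induction n as [|n IH]; simpl; auto.
  intros f [F1 F2]; split.
  - intros s Hs; auto_derive; auto.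
  - apply (Ck_ext a b n (fun s => - Derive f s)); auto.
    intros s Hs. symmetry. apply is_derive_unique. auto_derive. auto. eta_fix; ring.
Qed.

Lemma Ck_mult a b n : forall f g, Ck a b n f -> Ck a b n g -> Ck a b n (fun s => f s * g s).
Proof.
  induction n as [|n IH]; simpl; auto.
  intros f g [F1 F2] [G1 G2]; split.
  - intros s Hs; auto_derive; auto.
  - apply (Ck_ext a b n (fun s => Derive f s * g s + f s * Derive g s)).
    intros s Hs. symmetry. apply is_derive_unique. auto_derive. auto. eta_fix; ring.
    apply Ck_plus; apply IH; auto; apply Ck_S; simpl; auto.
Qed.

Lemma Ck_inv a b n : forall f, (forall s, in_I a b s -> f s <> 0) -> Ck a b n f -> Ck a b n (fun s => / f s).
Proof.
  induction n as [|n IH]; simpl; auto.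
  intros f Hf [F1 F2]; split.
  - intros s Hs; auto_derive; auto.
  - apply (Ck_ext a b n (fun s => - Derive f s * (/ f s * / f s))).
    intros s Hs. symmetry. apply is_derive_unique. auto_derive. auto. eta_fix; field. auto.
    apply Ck_mult. apply Ck_opp; auto. apply Ck_mult; apply IH; auto; apply Ck_S; simpl; auto.
Qed.

Lemma Ck_sqrt a b n : forall f, (forall s, in_I a b s -> 0 < f s) -> Ck a b n f -> Ck a b n (fun s => sqrt (f s)).
Proof.
  induction n as [|n IH]; simpl; auto.
  intros f Hf [F1 F2]; split.
  - intros s Hs. eexists. apply is_derive_sqrt. apply Derive_correct. auto. auto.
  - apply (Ck_ext a b n (fun s => Derive f s * (/2 * / sqrt (f s)))).
    intros s Hs. symmetry. apply is_derive_unique. 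
    assert (0 < sqrt (f s)) by (apply sqrt_lt_R0; auto).
    replace (Derive f s * (/ 2 * / sqrt (f s))) with (Derive f s / (2 * sqrt (f s))) by (field; lra).
    apply is_derive_sqrt. apply Derive_correct. auto. auto.
    apply Ck_mult; auto. apply Ck_mult. apply Ck_const.
    apply Ck_inv. intros s Hs. apply Rgt_not_eq. apply sqrt_lt_R0; auto.
    apply IH; auto. apply Ck_S; simpl; auto.
Qed.

Lemma Ck_Dn a b n j f : Ck a b (j + n) f -> Ck a b n (Derive_n f j).
Proof.
  revert n; induction j as [|j IH]; simpl; intros n H; auto.
  apply Ck_D. apply IH. rewrite <- plus_n_Sm. auto.
Qed.

Definition cx (al : R -> vec3) k s := vx (dvec_n k al s).
Definition cy (al : R -> vec3) k s := vy (dvec_n k al s).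
Definition cz (al : R -> vec3) k s := vz (dvec_n k al s).

Lemma D_cx al k s : Derive (cx al k) s = cx al (S k) s. Proof. unfold cx; simpl; reflexivity. Qed.
Lemma D_cy al k s : Derive (cy al k) s = cy al (S k) s. Proof. unfold cy; simpl; reflexivity. Qed.
Lemma D_cz al k s : Derive (cz al k) s = cz al (S k) s. Proof. unfold cz; simpl; reflexivity. Qed.

Lemma Ck_cx al a b : smooth_on a b al -> forall n k, Ck a b n (cx al k).
Proof.
  intros H n; induction n as [|n IH]; simpl; auto. intros k; split.
  intros s Hs; unfold cx, cy, cz; apply (proj1 (H k s Hs)). apply (Ck_ext a b n (cx al (S k))). intros; rewrite D_cx; auto. auto.
Qed.
Lemma Ck_cy al a b : smooth_on a b al -> forall n k, Ck a b n (cy al k).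
Proof.
  intros H n; induction n as [|n IH]; simpl; auto. intros k; split.
  intros s Hs; unfold cx, cy, cz; apply (proj1 (proj2 (H k s Hs))). apply (Ck_ext a b n (cy al (S k))). intros; rewrite D_cy; auto. auto.
Qed.
Lemma Ck_cz al a b : smooth_on a b al -> forall n k, Ck a b n (cz al k).
Proof.
  intros H n; induction n as [|n IH]; simpl; auto. intros k; split.
  intros s Hs; unfold cx, cy, cz; apply (proj2 (proj2 (H k s Hs))). apply (Ck_ext a b n (cz al (S k))). intros; rewrite D_cz; auto. auto.
Qed.

Lemma kappa_eq al s : kappa al s = sqrt (cx al 2 s * cx al 2 s + cy al 2 s * cy al 2 s + cz al 2 s * cz al 2 s).
Proof. unfold kappa, vnorm, dot, cx, cy, cz. reflexivity. Qed.

Definition Nx al s := / kappa al s * cx al 2 s.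
Definition Ny al s := / kappa al s * cy al 2 s.
Definition Nz al s := / kappa al s * cz al 2 s.
Definition Mx al := Derive (Nx al).
Definition My al := Derive (Ny al).
Definition Mz al := Derive (Nz al).
Definition pp al s := cx al 1 s * Mx al s + cy al 1 s * My al s + cz al 1 s * Mz al s.
Definition qq al s := Mx al s * Mx al s + My al s * My al s + Mz al s * Mz al s.

Definition UU al s := cx al 2 s * cx al 2 s + cy al 2 s * cy al 2 s + cz al 2 s * cz al 2 s.

Definition HYP al a b := smooth_on a b al /\ (forall s, in_I a b s -> vnorm (dvec al s) = 1)
  /\ (forall s, in_I a b s -> kappa al s <> 0).

Lemma UU_pos al a b s : HYP al a b -> in_I a b s -> 0 < UU al s.
Proof.
  intros [_ [_ Hk]] Hs. specialize (Hk s Hs). rewrite kappa_eq in Hk. fold (UU al s) in Hk.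
  assert (0 <= UU al s) by (unfold UU; nra).
  destruct H as [H|H]; auto. rewrite <- H in Hk. rewrite sqrt_0 in Hk. lra.
Qed.

Lemma kap_pos al a b s : HYP al a b -> in_I a b s -> 0 < kappa al s.
Proof. intros H Hs. rewrite kappa_eq. apply sqrt_lt_R0. apply (UU_pos al a b s H Hs). Qed.

Lemma kap_sq al a b s : HYP al a b -> in_I a b s -> kappa al s * kappa al s = UU al s.
Proof. intros H Hs. rewrite kappa_eq. apply sqrt_sqrt. generalize (UU_pos al a b s H Hs). unfold UU. lra. Qed.

Lemma Ck_kap al a b n : HYP al a b -> Ck a b n (kappa al).
Proof.
  intros H. apply (Ck_ext a b n (fun s => sqrt (UU al s))). intros; rewrite kappa_eq; auto.
  apply Ck_sqrt. intros; apply (UU_pos al a b); auto.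
  destruct H as [Hs _]. unfold UU.
  repeat apply Ck_plus; apply Ck_mult; first [apply Ck_cx|apply Ck_cy|apply Ck_cz]; auto.
Qed.

Lemma Ck_Nx al a b n : HYP al a b -> Ck a b n (Nx al).
Proof. intros H. apply Ck_mult. apply Ck_inv. intros; apply Rgt_not_eq, (kap_pos al a b); auto. apply Ck_kap; auto. apply Ck_cx. apply H. Qed.
Lemma Ck_Ny al a b n : HYP al a b -> Ck a b n (Ny al).
Proof. intros H. apply Ck_mult. apply Ck_inv. intros; apply Rgt_not_eq, (kap_pos al a b); auto. apply Ck_kap; auto. apply Ck_cy. apply H. Qed.
Lemma Ck_Nz al a b n : HYP al a b -> Ck a b n (Nz al).
Proof. intros H. apply Ck_mult. apply Ck_inv. intros; apply Rgt_not_eq, (kap_pos al a b); auto. apply Ck_kap; auto. apply Ck_cz. apply H. Qed.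
Lemma Ck_Mx al a b n : HYP al a b -> Ck a b n (Mx al).
Proof. intros H. apply Ck_D. apply Ck_Nx; auto. Qed.
Lemma Ck_My al a b n : HYP al a b -> Ck a b n (My al).
Proof. intros H. apply Ck_D. apply Ck_Ny; auto. Qed.
Lemma Ck_Mz al a b n : HYP al a b -> Ck a b n (Mz al).
Proof. intros H. apply Ck_D. apply Ck_Nz; auto. Qed.
Lemma Ck_pp al a b n : HYP al a b -> Ck a b n (pp al).
Proof. intros H. unfold pp.
  repeat apply Ck_plus; apply Ck_mult; [apply Ck_cx; apply H|apply Ck_Mx; auto|apply Ck_cy; apply H|apply Ck_My; auto|apply Ck_cz; apply H|apply Ck_Mz; auto]. Qed.
Lemma Ck_qq al a b n : HYP al a b -> Ck a b n (qq al).
Proof. intros H. unfold qq. 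
  repeat apply Ck_plus; apply Ck_mult; [apply Ck_Mx; auto|apply Ck_Mx; auto|apply Ck_My; auto|apply Ck_My; auto|apply Ck_Mz; auto|apply Ck_Mz; auto]. Qed.

Lemma ex_Ck a b f s : Ck a b 1 f -> in_I a b s -> ex_derive f s.
Proof. intros [H _] Hs; auto. Qed.

Lemma ex_cx al a b k s : HYP al a b -> in_I a b s -> ex_derive (cx al k) s.
Proof. intros H; apply ex_Ck, Ck_cx, H. Qed.
Lemma ex_cy al a b k s : HYP al a b -> in_I a b s -> ex_derive (cy al k) s.
Proof. intros H; apply ex_Ck, Ck_cy, H. Qed.
Lemma ex_cz al a b k s : HYP al a b -> in_I a b s -> ex_derive (cz al k) s.
Proof. intros H; apply ex_Ck, Ck_cz, H. Qed.
Lemma ex_kap al a b s : HYP al a b -> in_I a b s -> ex_derive (kappa al) s.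
Proof. intros H; apply ex_Ck, Ck_kap, H. Qed.
Lemma ex_Nx al a b s : HYP al a b -> in_I a b s -> ex_derive (Nx al) s.
Proof. intros H; apply ex_Ck, Ck_Nx, H. Qed.
Lemma ex_Ny al a b s : HYP al a b -> in_I a b s -> ex_derive (Ny al) s.
Proof. intros H; apply ex_Ck, Ck_Ny, H. Qed.
Lemma ex_Nz al a b s : HYP al a b -> in_I a b s -> ex_derive (Nz al) s.
Proof. intros H; apply ex_Ck, Ck_Nz, H. Qed.
Lemma ex_Mx al a b s : HYP al a b -> in_I a b s -> ex_derive (Mx al) s.
Proof. intros H; apply ex_Ck, Ck_Mx, H. Qed.
Lemma ex_My al a b s : HYP al a b -> in_I a b s -> ex_derive (My al) s.
Proof. intros H; apply ex_Ck, Ck_My, H. Qed.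
Lemma ex_Mz al a b s : HYP al a b -> in_I a b s -> ex_derive (Mz al) s.
Proof. intros H; apply ex_Ck, Ck_Mz, H. Qed.
Lemma ex_pp al a b s : HYP al a b -> in_I a b s -> ex_derive (pp al) s.
Proof. intros H; apply ex_Ck, Ck_pp, H. Qed.
Lemma ex_qq al a b s : HYP al a b -> in_I a b s -> ex_derive (qq al) s.
Proof. intros H; apply ex_Ck, Ck_qq, H. Qed.

Ltac exd1 := match goal with
  | |- True => exact I
  | |- ex_derive (fun x => cx _ _ x) _ => eapply ex_cx; eassumption
  | |- ex_derive (fun x => cy _ _ x) _ => eapply ex_cy; eassumption
  | |- ex_derive (fun x => cz _ _ x) _ => eapply ex_cz; eassumption
  | |- ex_derive (fun x => kappa _ x) _ => eapply ex_kap; eassumption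
  | |- ex_derive (fun x => Nx _ x) _ => eapply ex_Nx; eassumption
  | |- ex_derive (fun x => Ny _ x) _ => eapply ex_Ny; eassumption
  | |- ex_derive (fun x => Nz _ x) _ => eapply ex_Nz; eassumption
  | |- ex_derive (fun x => Mx _ x) _ => eapply ex_Mx; eassumption
  | |- ex_derive (fun x => My _ x) _ => eapply ex_My; eassumption
  | |- ex_derive (fun x => Mz _ x) _ => eapply ex_Mz; eassumption
  | |- ex_derive (fun x => pp _ x) _ => eapply ex_pp; eassumption
  | |- ex_derive (fun x => qq _ x) _ => eapply ex_qq; eassumption
  end.
Ltac exd := repeat match goal with |- _ /\ _ => split end; try exd1.
Ltac dfix := eta_fix; rewrite ?D_cx, ?D_cy, ?D_cz.

Lemma Derive_lconst a b (f : R -> R) c s : (forall t, in_I a b t -> f t = c) -> in_I a b s -> Derive f s = 0.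
Proof. intros H Hs. rewrite (Derive_ext_loc f (fun _ => c)). apply Derive_const. apply (loc_eq a b); auto. Qed.

Lemma F1 al a b s : HYP al a b -> in_I a b s ->
  cx al 1 s * cx al 1 s + cy al 1 s * cy al 1 s + cz al 1 s * cz al 1 s = 1.
Proof.
  intros H Hs. destruct H as [_ [Hu _]]. specialize (Hu s Hs). unfold vnorm in Hu.
  assert (Hd: 0 <= dot (dvec al s) (dvec al s)) by (unfold dot; nra).
  assert (E: dot (dvec al s) (dvec al s) = 1) by (rewrite <- (sqrt_sqrt _ Hd), Hu; ring).
  unfold dot in E. unfold cx, cy, cz. exact E.
Qed.

Lemma F2 al a b s : HYP al a b -> in_I a b s ->
  cx al 1 s * cx al 2 s + cy al 1 s * cy al 2 s + cz al 1 s * cz al 2 s = 0.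
Proof.
  intros H Hs.
  assert (E: Derive (fun s => cx al 1 s * cx al 1 s + cy al 1 s * cy al 1 s + cz al 1 s * cz al 1 s) s
   = 2 * (cx al 1 s * cx al 2 s + cy al 1 s * cy al 2 s + cz al 1 s * cz al 2 s)).
  { apply is_derive_unique. auto_derive. exd. dfix. ring. }
  rewrite (Derive_lconst a b _ 1) in E; auto. lra. intros; apply (F1 al a b); auto.
Qed.

Lemma F4 al a b s : HYP al a b -> in_I a b s ->
  Nx al s * Nx al s + Ny al s * Ny al s + Nz al s * Nz al s = 1.
Proof.
  intros H Hs. generalize (kap_sq al a b s H Hs) (kap_pos al a b s H Hs). unfold Nx, Ny, Nz, UU. intros E P.
  apply Rmult_eq_reg_l with (kappa al s * kappa al s). 2: nra.
  rewrite E at 2. field. lra.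
Qed.

Lemma F5 al a b s : HYP al a b -> in_I a b s ->
  cx al 1 s * Nx al s + cy al 1 s * Ny al s + cz al 1 s * Nz al s = 0.
Proof.
  intros H Hs. generalize (F2 al a b s H Hs) (kap_pos al a b s H Hs). unfold Nx, Ny, Nz. intros E P.
  replace 0 with (/ kappa al s * 0) by ring. rewrite <- E. ring.
Qed.

Lemma F6 al a b s : HYP al a b -> in_I a b s ->
  Nx al s * Mx al s + Ny al s * My al s + Nz al s * Mz al s = 0.
Proof.
  intros H Hs.
  assert (E: Derive (fun s => Nx al s * Nx al s + Ny al s * Ny al s + Nz al s * Nz al s) s
   = 2 * (Nx al s * Mx al s + Ny al s * My al s + Nz al s * Mz al s)).
  { apply is_derive_unique. auto_derive. exd. dfix. unfold Mx, My, Mz. ring. }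
  rewrite (Derive_lconst a b _ 1) in E; auto. lra. intros; apply (F4 al a b); auto.
Qed.

Lemma F7 al a b s : HYP al a b -> in_I a b s -> pp al s = - kappa al s.
Proof.
  intros H Hs.
  assert (E: Derive (fun s => cx al 1 s * Nx al s + cy al 1 s * Ny al s + cz al 1 s * Nz al s) s
   = (cx al 2 s * Nx al s + cy al 2 s * Ny al s + cz al 2 s * Nz al s) + pp al s).
  { apply is_derive_unique. auto_derive. exd. dfix. unfold pp, Mx, My, Mz. ring. }
  rewrite (Derive_lconst a b _ 0) in E; auto. 2: intros; apply (F5 al a b); auto.
  assert (cx al 2 s * Nx al s + cy al 2 s * Ny al s + cz al 2 s * Nz al s = kappa al s).
  { generalize (kap_sq al a b s H Hs) (kap_pos al a b s H Hs). unfold Nx, Ny, Nz, UU. intros E2 P.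
    apply Rmult_eq_reg_l with (kappa al s). 2: nra. rewrite E2. field. lra. }
  lra.
Qed.

Lemma tau_eq al s : tau al s =
  Mx al s * (cy al 1 s * Nz al s - cz al 1 s * Ny al s)
  + My al s * (cz al 1 s * Nx al s - cx al 1 s * Nz al s)
  + Mz al s * (cx al 1 s * Ny al s - cy al 1 s * Nx al s).
Proof. reflexivity. Qed.

Lemma F8 al a b s : HYP al a b -> in_I a b s -> qq al s = kappa al s ^ 2 + tau al s ^ 2.
Proof.
  intros H Hs. rewrite tau_eq.
  generalize (F1 al a b s H Hs) (F4 al a b s H Hs) (F5 al a b s H Hs) (F6 al a b s H Hs) (F7 al a b s H Hs).
  unfold pp, qq.
  set (t1 := cx al 1 s); set (t2 := cy al 1 s); set (t3 := cz al 1 s);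
  set (n1 := Nx al s); set (n2 := Ny al s); set (n3 := Nz al s);
  set (m1 := Mx al s); set (m2 := My al s); set (m3 := Mz al s); set (k := kappa al s).
  intros E1 E4 E5 E6 E7.
  assert (G: (m1 * (t2 * n3 - t3 * n2) + m2 * (t3 * n1 - t1 * n3) + m3 * (t1 * n2 - t2 * n1))^2 =
    (m1*m1+m2*m2+m3*m3) * (t1*t1+t2*t2+t3*t3) * (n1*n1+n2*n2+n3*n3)
    + 2 * (t1*n1+t2*n2+t3*n3) * (n1*m1+n2*m2+n3*m3) * (t1*m1+t2*m2+t3*m3)
    - (t1*t1+t2*t2+t3*t3) * (n1*m1+n2*m2+n3*m3)^2
    - (n1*n1+n2*n2+n3*n3) * (t1*m1+t2*m2+t3*m3)^2
    - (m1*m1+m2*m2+m3*m3) * (t1*n1+t2*n2+t3*n3)^2) by ring.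
  rewrite G, E1, E4, E5, E6, E7. ring.
Qed.

Lemma pd1_eq al a b u v : HYP al a b -> in_I a b u ->
  pd (ruled al) i1 u v = mkv (cx al 1 u + v * Mx al u) (cy al 1 u + v * My al u) (cz al 1 u + v * Mz al u).
Proof.
  intros H Hs. unfold pd, dvec. f_equal.
  - replace (fun t => vx (ruled al t v)) with (fun t => cx al 0 t + v * Nx al t) by reflexivity.
    apply is_derive_unique; auto_derive; exd. dfix. unfold Mx. ring.
  - replace (fun t => vy (ruled al t v)) with (fun t => cy al 0 t + v * Ny al t) by reflexivity.
    apply is_derive_unique; auto_derive; exd. dfix. unfold My. ring.
  - replace (fun t => vz (ruled al t v)) with (fun t => cz al 0 t + v * Nz al t) by reflexivity.
    apply is_derive_unique; auto_derive; exd. dfix. unfold Mz. ring.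
Qed.

Lemma pd2_eq al u v : pd (ruled al) i2 u v = mkv (Nx al u) (Ny al u) (Nz al u).
Proof.
  unfold pd, dvec. f_equal.
  - replace (fun t => vx (ruled al u t)) with (fun t => cx al 0 u + t * Nx al u) by reflexivity.
    apply is_derive_unique; auto_derive; auto. ring.
  - replace (fun t => vy (ruled al u t)) with (fun t => cy al 0 u + t * Ny al u) by reflexivity.
    apply is_derive_unique; auto_derive; auto. ring.
  - replace (fun t => vz (ruled al u t)) with (fun t => cz al 0 u + t * Nz al u) by reflexivity.
    apply is_derive_unique; auto_derive; auto. ring.
Qed.

Definition GG al u v := 1 + 2 * v * pp al u + v ^ 2 * qq al u.

Lemma g11_eq al a b u v : HYP al a b -> in_I a b u -> gmet (ruled al) i1 i1 u v = GG al u v.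
Proof.
  intros H Hs. unfold gmet, GG. rewrite (pd1_eq al a b u v H Hs). unfold dot, pp, qq; cbn [vx vy vz].
  generalize (F1 al a b u H Hs). intros E. rewrite <- E. ring.
Qed.
Lemma g12_eq al a b u v : HYP al a b -> in_I a b u -> gmet (ruled al) i1 i2 u v = 0.
Proof.
  intros H Hs. unfold gmet. rewrite (pd1_eq al a b u v H Hs), pd2_eq. unfold dot; simpl.
  generalize (F5 al a b u H Hs) (F6 al a b u H Hs). intros E1 E2. 
  replace 0 with (0 + v * 0) by ring. rewrite <- E1 at 1. rewrite <- E2. ring.
Qed.
Lemma g21_eq al a b u v : HYP al a b -> in_I a b u -> gmet (ruled al) i2 i1 u v = 0.
Proof.
  intros H Hs. unfold gmet. rewrite (pd1_eq al a b u v H Hs), pd2_eq. unfold dot; simpl.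
  generalize (F5 al a b u H Hs) (F6 al a b u H Hs). intros E1 E2. 
  replace 0 with (0 + v * 0) by ring. rewrite <- E1 at 1. rewrite <- E2. ring.
Qed.
Lemma g22_eq al a b u v : HYP al a b -> in_I a b u -> gmet (ruled al) i2 i2 u v = 1.
Proof.
  intros H Hs. unfold gmet. rewrite pd2_eq. unfold dot; simpl. apply (F4 al a b u H Hs).
Qed.

Lemma dp_const al a b i j l c u v : HYP al a b -> in_I a b u ->
  (forall u' v', in_I a b u' -> gmet (ruled al) j l u' v' = c) ->
  dpart i (gmet (ruled al) j l) u v = 0.
Proof.
  intros H Hs Hc. destruct i; simpl.
  - apply (Derive_lconst a b _ c); auto.
  - rewrite (Derive_ext _ (fun _ => c)). apply Derive_const. intros; auto.
Qed.

Lemma dp_i_12 al a b i u v : HYP al a b -> in_I a b u -> dpart i (gmet (ruled al) i1 i2) u v = 0.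
Proof. intros H Hs. apply (dp_const al a b _ _ _ 0); auto. intros; apply (g12_eq al a b); auto. Qed.
Lemma dp_i_21 al a b i u v : HYP al a b -> in_I a b u -> dpart i (gmet (ruled al) i2 i1) u v = 0.
Proof. intros H Hs. apply (dp_const al a b _ _ _ 0); auto. intros; apply (g21_eq al a b); auto. Qed.
Lemma dp_i_22 al a b i u v : HYP al a b -> in_I a b u -> dpart i (gmet (ruled al) i2 i2) u v = 0.
Proof. intros H Hs. apply (dp_const al a b _ _ _ 1); auto. intros; apply (g22_eq al a b); auto. Qed.

Lemma dp_1_11 al a b u v : HYP al a b -> in_I a b u ->
  dpart i1 (gmet (ruled al) i1 i1) u v = 2 * v * Derive (pp al) u + v ^ 2 * Derive (qq al) u.
Proof.
  intros H Hs. simpl.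
  rewrite (Derive_ext_loc _ (fun u' => 1 + 2 * v * pp al u' + v ^ 2 * qq al u')).
  apply is_derive_unique; auto_derive; exd. eta_fix. ring.
  apply (loc_eq a b); auto. intros; apply (g11_eq al a b); auto.
Qed.

Lemma dp_2_11 al a b u v : HYP al a b -> in_I a b u ->
  dpart i2 (gmet (ruled al) i1 i1) u v = 2 * pp al u + 2 * v * qq al u.
Proof.
  intros H Hs. simpl.
  rewrite (Derive_ext _ (fun v' => 1 + 2 * v' * pp al u + v' ^ 2 * qq al u)).
  apply is_derive_unique; auto_derive; auto. ring.
  intros; apply (g11_eq al a b); auto.
Qed.

Ltac gsimp H Hs :=
  unfold Gamma, sum2, ginv, detg;
  rewrite ?(dp_1_11 _ _ _ _ _ H Hs), ?(dp_2_11 _ _ _ _ _ H Hs),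
    ?(dp_i_12 _ _ _ _ _ _ H Hs), ?(dp_i_21 _ _ _ _ _ _ H Hs), ?(dp_i_22 _ _ _ _ _ _ H Hs),
    ?(g11_eq _ _ _ _ _ H Hs), ?(g12_eq _ _ _ _ _ H Hs), ?(g21_eq _ _ _ _ _ H Hs), ?(g22_eq _ _ _ _ _ H Hs).

Lemma Gam111 al a b u v : HYP al a b -> in_I a b u ->
  Gamma (ruled al) i1 i1 i1 u v = (v * Derive (pp al) u + v ^ 2 / 2 * Derive (qq al) u) * / GG al u v.
Proof. intros H Hs. gsimp H Hs. rewrite Rmult_1_r, Rmult_0_l, Rminus_0_r. unfold Rdiv. set (w := / GG al u v). field. Qed.

Lemma Gam211 al a b u v : HYP al a b -> in_I a b u ->
  Gamma (ruled al) i2 i1 i1 u v = - (pp al u + v * qq al u) * (GG al u v * / GG al u v).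
Proof. intros H Hs. gsimp H Hs. rewrite Rmult_1_r, Rmult_0_l, Rminus_0_r. unfold Rdiv. set (w := / GG al u v). field. Qed.

Lemma GG0 al u : GG al u 0 = 1.
Proof. unfold GG. ring. Qed.

Ltac gsimp0 H Hs := gsimp H Hs; rewrite ?Rmult_1_r, ?Rmult_0_l, ?Rminus_0_r, ?GG0; unfold Rdiv; rewrite ?Rinv_1; field.

Lemma Gam0_111 al a b u : HYP al a b -> in_I a b u -> Gamma (ruled al) i1 i1 i1 u 0 = 0.
Proof. intros H Hs. gsimp0 H Hs. Qed.
Lemma Gam0_112 al a b u : HYP al a b -> in_I a b u -> Gamma (ruled al) i1 i1 i2 u 0 = pp al u.
Proof. intros H Hs. gsimp0 H Hs. Qed.
Lemma Gam0_121 al a b u : HYP al a b -> in_I a b u -> Gamma (ruled al) i1 i2 i1 u 0 = pp al u.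
Proof. intros H Hs. gsimp0 H Hs. Qed.
Lemma Gam0_122 al a b u : HYP al a b -> in_I a b u -> Gamma (ruled al) i1 i2 i2 u 0 = 0.
Proof. intros H Hs. gsimp0 H Hs. Qed.
Lemma Gam0_211 al a b u : HYP al a b -> in_I a b u -> Gamma (ruled al) i2 i1 i1 u 0 = - pp al u.
Proof. intros H Hs. gsimp0 H Hs. Qed.
Lemma Gam0_212 al a b u : HYP al a b -> in_I a b u -> Gamma (ruled al) i2 i1 i2 u 0 = 0.
Proof. intros H Hs. gsimp0 H Hs. Qed.
Lemma Gam0_221 al a b u : HYP al a b -> in_I a b u -> Gamma (ruled al) i2 i2 i1 u 0 = 0.
Proof. intros H Hs. gsimp0 H Hs. Qed.
Lemma Gam0_222 al a b u : HYP al a b -> in_I a b u -> Gamma (ruled al) i2 i2 i2 u 0 = 0.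
Proof. intros H Hs. gsimp0 H Hs. Qed.

Lemma dG_2_111 al a b s : HYP al a b -> in_I a b s ->
  dpart i2 (Gamma (ruled al) i1 i1 i1) s 0 = Derive (pp al) s.
Proof.
  intros H Hs. simpl.
  rewrite (Derive_ext _ (fun v => (v * Derive (pp al) s + v ^ 2 / 2 * Derive (qq al) s) * / (1 + 2 * v * pp al s + v ^ 2 * qq al s))).
  2: intros; rewrite (Gam111 al a b s t H Hs); reflexivity.
  apply is_derive_unique; auto_derive. 
  - repeat split. replace (1 + 2 * 0 * pp al s + 0 * (0 * 1) * qq al s) with 1 by ring. lra.
  - field_simplify. field. all: ring_simplify; lra.
Qed.

Lemma dG_2_211 al a b s : HYP al a b -> in_I a b s ->
  dpart i2 (Gamma (ruled al) i2 i1 i1) s 0 = - qq al s.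
Proof.
  intros H Hs. simpl.
  rewrite (Derive_ext _ (fun v => - (pp al s + v * qq al s) * ((1 + 2 * v * pp al s + v ^ 2 * qq al s) * / (1 + 2 * v * pp al s + v ^ 2 * qq al s)))).
  2: intros; rewrite (Gam211 al a b s t H Hs); reflexivity.
  apply is_derive_unique; auto_derive. 
  - repeat split. replace (1 + 2 * 0 * pp al s + 0 * (0 * 1) * qq al s) with 1 by ring. lra.
  - field_simplify. field. all: ring_simplify; lra.
Qed.

Lemma dG_1_121 al a b s : HYP al a b -> in_I a b s ->
  dpart i1 (Gamma (ruled al) i1 i2 i1) s 0 = Derive (pp al) s.
Proof.
  intros H Hs. simpl. apply Derive_ext_loc. apply (loc_eq a b); auto.
  intros; apply (Gam0_121 al a b); auto.
Qed.

Lemma dG_1_221 al a b s : HYP al a b -> in_I a b s ->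
  dpart i1 (Gamma (ruled al) i2 i2 i1) s 0 = 0.
Proof.
  intros H Hs. simpl. apply (Derive_lconst a b _ 0); auto.
  intros; apply (Gam0_221 al a b); auto.
Qed.

Ltac g0 H Hs := rewrite ?(Gam0_111 _ _ _ _ H Hs), ?(Gam0_112 _ _ _ _ H Hs), ?(Gam0_121 _ _ _ _ H Hs),
  ?(Gam0_122 _ _ _ _ H Hs), ?(Gam0_211 _ _ _ _ H Hs), ?(Gam0_212 _ _ _ _ H Hs),
  ?(Gam0_221 _ _ _ _ H Hs), ?(Gam0_222 _ _ _ _ H Hs).

Lemma Riem1 al a b s : HYP al a b -> in_I a b s -> Riem (ruled al) i1 i2 i1 i1 s 0 = 0.
Proof.
  intros H Hs. unfold Riem, sum2. rewrite (dG_2_111 al a b s H Hs), (dG_1_121 al a b s H Hs).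
  g0 H Hs. ring.
Qed.

Lemma Riem2 al a b s : HYP al a b -> in_I a b s -> Riem (ruled al) i2 i2 i1 i1 s 0 = - tau al s ^ 2.
Proof.
  intros H Hs. unfold Riem, sum2. rewrite (dG_2_211 al a b s H Hs), (dG_1_221 al a b s H Hs).
  g0 H Hs. rewrite (F8 al a b s H Hs), (F7 al a b s H Hs). ring.
Qed.

Lemma Riem_anti X l i j k u v : Riem X l i j k u v = - Riem X l j i k u v.
Proof. unfold Riem. unfold sum2. ring. Qed.
Lemma Riem_diag X l i k u v : Riem X l i i k u v = 0.
Proof. unfold Riem, sum2. ring. Qed.

Lemma Dc1 s : Derive (curve_s0 i1) s = 1.
Proof. apply (Derive_id s). Qed.
Lemma Dc2 s : Derive (curve_s0 i2) s = 0.
Proof. apply (Derive_const 0 s). Qed.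

Lemma covD1 al a b (V : vfield) s : HYP al a b -> in_I a b s ->
  covD (ruled al) curve_s0 V i1 s = Derive (V i1) s - kappa al s * V i2 s.
Proof.
  intros H Hs. unfold covD, sum2. cbn [curve_s0]. rewrite Dc1, Dc2.
  g0 H Hs. rewrite (F7 al a b s H Hs). ring.
Qed.
Lemma covD2 al a b (V : vfield) s : HYP al a b -> in_I a b s ->
  covD (ruled al) curve_s0 V i2 s = Derive (V i2) s + kappa al s * V i1 s.
Proof.
  intros H Hs. unfold covD, sum2. cbn [curve_s0]. rewrite Dc1, Dc2.
  g0 H Hs. rewrite (F7 al a b s H Hs). ring.
Qed.

Definition Dk al (j : nat) (s : R) := Derive_n (kappa al) j s.
Lemma DkS al j s : Derive (Dk al j) s = Dk al (S j) s.
Proof. unfold Dk; reflexivity. Qed.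
Lemma Dk0 al s : kappa al s = Dk al 0 s.
Proof. reflexivity. Qed.

Lemma ex_Dk al a b j s : HYP al a b -> in_I a b s -> ex_derive (Dk al j) s.
Proof. intros H Hs. apply (ex_Ck a b); auto. apply Ck_Dn. apply Ck_kap; auto. Qed.

Ltac exk := repeat match goal with |- _ /\ _ => split end; try match goal with
  | |- True => exact I
  | |- ex_derive (fun x => Dk _ _ x) _ => eapply ex_Dk; eassumption
  end.

Ltac dk := eta_fix; rewrite ?DkS.

Definition X_ al := ruled al.
Notation TT := (ctangent curve_s0).

Lemma step al a b (V : vfield) (A B : R -> R) : HYP al a b ->
  (forall s, in_I a b s -> V i1 s = A s) -> (forall s, in_I a b s -> V i2 s = B s) ->
  forall s, in_I a b s -> covD (ruled al) curve_s0 V i1 s = Derive A s - Dk al 0 s * B s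
     /\ covD (ruled al) curve_s0 V i2 s = Derive B s + Dk al 0 s * A s.
Proof.
  intros H HA HB s Hs. rewrite (covD1 al a b V s H Hs), (covD2 al a b V s H Hs), (Dk0 al s).
  rewrite (Derive_ext_loc (V i1) A), (Derive_ext_loc (V i2) B), HA, HB; auto;
  apply (loc_eq a b); auto.
Qed.

Lemma C0 s : TT i1 s = 1 /\ TT i2 s = 0.
Proof. split; [apply Dc1|apply Dc2]. Qed.

Lemma C1 al a b s : HYP al a b -> in_I a b s ->
  covD_n (ruled al) curve_s0 1 TT i1 s = 0 /\ covD_n (ruled al) curve_s0 1 TT i2 s = Dk al 0 s.
Proof.
  intros H Hs. simpl. destruct (step al a b TT (fun _ => 1) (fun _ => 0) H) with s as [E1 E2]; auto.
  intros s' _; exact (proj1 (C0 s')). intros s' _; exact (proj2 (C0 s')). rewrite E1, E2, !Derive_const. split; ring.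
Qed.

Lemma C2 al a b s : HYP al a b -> in_I a b s ->
  covD_n (ruled al) curve_s0 2 TT i1 s = - Dk al 0 s ^ 2 /\
  covD_n (ruled al) curve_s0 2 TT i2 s = Dk al 1 s.
Proof.
  intros H Hs. change (covD_n (ruled al) curve_s0 2 TT) with (covD (ruled al) curve_s0 (covD_n (ruled al) curve_s0 1 TT)).
  destruct (step al a b (covD_n (ruled al) curve_s0 1 TT) (fun _ => 0) (Dk al 0) H) with s as [E1 E2]; auto.
  intros s' Hs'; exact (proj1 (C1 al a b s' H Hs')). intros s' Hs'; exact (proj2 (C1 al a b s' H Hs')). rewrite E1, E2, !Derive_const. split; [ring|].
  rewrite DkS. ring.
Qed.

Lemma C3 al a b s : HYP al a b -> in_I a b s ->
  covD_n (ruled al) curve_s0 3 TT i1 s = - 3 * Dk al 0 s * Dk al 1 s /\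
  covD_n (ruled al) curve_s0 3 TT i2 s = Dk al 2 s - Dk al 0 s ^ 3.
Proof.
  intros H Hs. change (covD_n (ruled al) curve_s0 3 TT) with (covD (ruled al) curve_s0 (covD_n (ruled al) curve_s0 2 TT)).
  destruct (step al a b (covD_n (ruled al) curve_s0 2 TT) (fun s => - Dk al 0 s ^ 2) (Dk al 1) H) with s as [E1 E2]; auto.
  intros s' Hs'; exact (proj1 (C2 al a b s' H Hs')). intros s' Hs'; exact (proj2 (C2 al a b s' H Hs')). rewrite E1, E2. split.
  - assert (D: Derive (fun s => - Dk al 0 s ^ 2) s = - 2 * Dk al 0 s * Dk al 1 s).
    { apply is_derive_unique; auto_derive; exk. dk. ring. }
    rewrite D. ring.
  - rewrite DkS. ring.
Qed.

Lemma C4 al a b s : HYP al a b -> in_I a b s ->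
  covD_n (ruled al) curve_s0 4 TT i1 s = - 3 * Dk al 1 s ^ 2 - 4 * Dk al 0 s * Dk al 2 s + Dk al 0 s ^ 4 /\
  covD_n (ruled al) curve_s0 4 TT i2 s = Dk al 3 s - 6 * Dk al 0 s ^ 2 * Dk al 1 s.
Proof.
  intros H Hs. change (covD_n (ruled al) curve_s0 4 TT) with (covD (ruled al) curve_s0 (covD_n (ruled al) curve_s0 3 TT)).
  destruct (step al a b (covD_n (ruled al) curve_s0 3 TT) (fun s => - 3 * Dk al 0 s * Dk al 1 s)
     (fun s => Dk al 2 s - Dk al 0 s ^ 3) H) with s as [E1 E2]; auto.
  intros s' Hs'; exact (proj1 (C3 al a b s' H Hs')). intros s' Hs'; exact (proj2 (C3 al a b s' H Hs')). rewrite E1, E2. split.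
  - assert (D: Derive (fun s => - 3 * Dk al 0 s * Dk al 1 s) s = - 3 * (Dk al 1 s ^ 2 + Dk al 0 s * Dk al 2 s)).
    { apply is_derive_unique; auto_derive; exk. dk. ring. }
    rewrite D. ring.
  - assert (D: Derive (fun s => Dk al 2 s - Dk al 0 s ^ 3) s = Dk al 3 s - 3 * Dk al 0 s ^ 2 * Dk al 1 s).
    { apply is_derive_unique; auto_derive; exk. dk. ring. }
    rewrite D. ring.
Qed.

Lemma C5 al a b s : HYP al a b -> in_I a b s ->
  covD_n (ruled al) curve_s0 5 TT i1 s = - 10 * Dk al 1 s * Dk al 2 s - 5 * Dk al 0 s * Dk al 3 s + 10 * Dk al 0 s ^ 3 * Dk al 1 s /\
  covD_n (ruled al) curve_s0 5 TT i2 s = Dk al 4 s - 15 * Dk al 0 s * Dk al 1 s ^ 2 - 10 * Dk al 0 s ^ 2 * Dk al 2 s + Dk al 0 s ^ 5.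
Proof.
  intros H Hs. change (covD_n (ruled al) curve_s0 5 TT) with (covD (ruled al) curve_s0 (covD_n (ruled al) curve_s0 4 TT)).
  destruct (step al a b (covD_n (ruled al) curve_s0 4 TT) (fun s => - 3 * Dk al 1 s ^ 2 - 4 * Dk al 0 s * Dk al 2 s + Dk al 0 s ^ 4)
     (fun s => Dk al 3 s - 6 * Dk al 0 s ^ 2 * Dk al 1 s) H) with s as [E1 E2]; auto.
  intros s' Hs'; exact (proj1 (C4 al a b s' H Hs')). intros s' Hs'; exact (proj2 (C4 al a b s' H Hs')). rewrite E1, E2. split.
  - assert (D: Derive (fun s => - 3 * Dk al 1 s ^ 2 - 4 * Dk al 0 s * Dk al 2 s + Dk al 0 s ^ 4) s
      = - 6 * Dk al 1 s * Dk al 2 s - 4 * Dk al 1 s * Dk al 2 s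
        - 4 * Dk al 0 s * Dk al 3 s + 4 * Dk al 0 s ^ 3 * Dk al 1 s).
    { apply is_derive_unique; auto_derive; exk. dk. ring. }
    rewrite D. ring.
  - assert (D: Derive (fun s => Dk al 3 s - 6 * Dk al 0 s ^ 2 * Dk al 1 s) s
      = Dk al 4 s - 12 * Dk al 0 s * Dk al 1 s ^ 2 - 6 * Dk al 0 s ^ 2 * Dk al 2 s).
    { apply is_derive_unique; auto_derive; exk. dk. ring. }
    rewrite D. ring.
Qed.

Lemma ballR (x y eps : R) : ball x eps y <-> Rabs (y - x) < eps.
Proof. split; intro H; exact H. Qed.

Lemma loc_ball (x : R) (P : R -> Prop) : locally x P -> exists d, 0 < d /\ forall y, Rabs (y - x) < d -> P y.
Proof.
  intros [eps He]. exists eps. split. apply cond_pos. intros y Hy. apply He. apply ballR. auto.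
Qed.

Lemma ball_loc (x : R) (P : R -> Prop) d : 0 < d -> (forall y, Rabs (y - x) < d -> P y) -> locally x P.
Proof.
  intros Hd H. exists (mkposreal d Hd). intros y Hy. apply H. apply ballR in Hy. auto.
Qed.

Lemma loc_neq (z c : R) : z <> c -> locally z (fun w => w <> c).
Proof.
  intros H. apply (ball_loc z _ (Rabs (z - c))).
  apply Rabs_pos_lt. lra.
  intros y Hy Hyc. subst. rewrite Rabs_minus_sym in Hy. lra.
Qed.

Lemma cont_neq (f : R -> R) x c : continuous f x -> f x <> c -> locally x (fun y => f y <> c).
Proof. intros Hc Hn. exact (Hc _ (loc_neq _ _ Hn)). Qed.

Lemma seg_conn (P : R -> Prop) x0 x1 : x0 <= x1 ->
  (forall x, x0 <= x <= x1 -> P x -> locally x P) ->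
  (forall x, x0 <= x <= x1 -> ~ P x -> locally x (fun y => ~ P y)) ->
  P x0 -> P x1.
Proof.
  intros Hle Hop Hcl H0.
  set (A := fun x => x0 <= x <= x1 /\ forall y, x0 <= y <= x -> P y).
  assert (Hb : bound A). { exists x1. intros x [[_ h] _]; auto. }
  assert (Hne : exists x, A x). { exists x0. split. lra. intros y Hy. replace y with x0 by lra. auto. }
  destruct (completeness A Hb Hne) as [m [Hm1 Hm2]].
  assert (Hm0 : x0 <= m). { apply Hm1. destruct Hne; unfold A; split; [lra|]. intros y Hy. replace y with x0 by lra. auto. }
  assert (Hmx : m <= x1). { apply Hm2. intros x [[_ h] _]; auto. }
  assert (Happ : forall d, 0 < d -> exists x, A x /\ m - d < x).
  { intros d Hd. apply NNPP. intros Hn. assert (m <= m - d). apply Hm2. intros x Ax.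
    destruct (Rle_or_lt x (m - d)); auto. exfalso. apply Hn. exists x; auto. lra. }
  destruct (classic (P m)) as [Pm|Pm].
  - destruct (loc_ball _ _ (Hop m (conj Hm0 Hmx) Pm)) as [d [Hd Hball]].
    destruct (Happ d Hd) as [x [[Ax1 Ax2] Ax3]].
    assert (HA : A (Rmin (m + d / 2) x1)).
    { split. split. apply Rmin_glb; lra. apply Rmin_r.
      intros y [Hy1 Hy2]. destruct (Rle_or_lt y x). apply Ax2; lra.
      apply Hball. assert (y <= m + d/2) by (eapply Rle_trans; [apply Hy2|apply Rmin_l]).
      assert (x <= m) by (apply Hm1; split; auto).
      apply Rabs_def1; lra. }
    apply Hm1 in HA. unfold Rmin in HA. destruct (Rle_dec (m + d / 2) x1). lra.
    replace x1 with m by lra. auto.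
  - destruct (loc_ball _ _ (Hcl m (conj Hm0 Hmx) Pm)) as [d [Hd Hball]].
    destruct (Happ d Hd) as [x [[Ax1 Ax2] Ax3]].
    assert (x <= m) by (apply Hm1; split; auto).
    exfalso. apply (Hball x). apply Rabs_def1; lra. apply Ax2. lra.
Qed.

Lemma in_I_conv a b x0 x1 y : in_I a b x0 -> in_I a b x1 -> Rmin x0 x1 <= y <= Rmax x0 x1 -> in_I a b y.
Proof.
  intros [A0 B0] [A1 B1] [H1 H2]. split.
  - apply Rbar_lt_le_trans with (Finite (Rmin x0 x1)).
    unfold Rmin; destruct (Rle_dec x0 x1); auto. simpl; lra.
  - apply Rbar_le_lt_trans with (Finite (Rmax x0 x1)).
    simpl; lra. unfold Rmax; destruct (Rle_dec x0 x1); auto.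
Qed.

Lemma I_conn a b (P : R -> Prop) :
  (forall x, in_I a b x -> P x -> locally x P) ->
  (forall x, in_I a b x -> ~ P x -> locally x (fun y => ~ P y)) ->
  forall x0 x1, in_I a b x0 -> in_I a b x1 -> P x0 -> P x1.
Proof.
  intros Hop Hcl x0 x1 I0 I1 P0.
  destruct (Rle_or_lt x0 x1).
  - apply (seg_conn P x0 x1); auto.
    + intros x Hx; apply Hop. apply (in_I_conv a b x0 x1); auto. rewrite Rmin_left, Rmax_right; lra.
    + intros x Hx; apply Hcl. apply (in_I_conv a b x0 x1); auto. rewrite Rmin_left, Rmax_right; lra.
  - apply NNPP. intros N1.
    assert (~ P x0). apply (seg_conn (fun y => ~ P y) x1 x0); auto. lra.
    + intros x Hx; apply Hcl. apply (in_I_conv a b x0 x1); auto. rewrite Rmin_right, Rmax_left; lra.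
    + intros x Hx Hn. apply NNPP in Hn. apply (filter_imp P). intros y Py Hy. auto.
      apply Hop; auto. apply (in_I_conv a b x0 x1); auto. rewrite Rmin_right, Rmax_left; lra.
    + auto.
Qed.

Definition Hh al c1 s := 10 * Dk al 2 s - 2 * c1 / (Dk al 0 s * Dk al 0 s) - 4 * Dk al 0 s ^ 3.

Lemma k0_pos al a b s : HYP al a b -> in_I a b s -> 0 < Dk al 0 s.
Proof. intros H Hs. rewrite <- Dk0. apply (kap_pos al a b s H Hs). Qed.

Lemma ex_Hh al a b c1 s : HYP al a b -> in_I a b s -> ex_derive (Hh al c1) s.
Proof.
  intros H Hs. generalize (k0_pos al a b s H Hs); intros P. unfold Hh. auto_derive. exk. nra.
Qed.

Lemma cont_Dk al a b j s : HYP al a b -> in_I a b s -> continuous (Dk al j) s.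
Proof. intros H Hs. exact (ex_derive_continuous (Dk al j) s (ex_Dk al a b j s H Hs)). Qed.

Lemma cont_Hh al a b c1 s : HYP al a b -> in_I a b s -> continuous (Hh al c1) s.
Proof. intros H Hs. exact (ex_derive_continuous (Hh al c1) s (ex_Hh al a b c1 s H Hs)). Qed.

Lemma prodH al a b c1 c2 : HYP al a b ->
  (forall s, in_I a b s -> 5 * (Derive (kappa al) s) ^ 2 = c2 - 2 * c1 / kappa al s + kappa al s ^ 4) ->
  forall s, in_I a b s -> Dk al 1 s * Hh al c1 s = 0.
Proof.
  intros H Hfi s Hs.
  assert (E: Derive (fun s => 5 * Dk al 1 s ^ 2 - (c2 - 2 * c1 / Dk al 0 s + Dk al 0 s ^ 4)) s = Dk al 1 s * Hh al c1 s).
  { generalize (k0_pos al a b s H Hs); intros P.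
    apply is_derive_unique; auto_derive. exk. lra. dk. unfold Hh. field. lra. }
  rewrite <- E. apply (Derive_lconst a b _ 0); auto.
  intros t Ht. generalize (Hfi t Ht). change (Dk al 1 t) with (Derive (kappa al) t); change (Dk al 0 t) with (kappa al t). intros E2. rewrite E2. ring.
Qed.

Lemma Hh_zero al a b c1 c2 : HYP al a b ->
  (exists s1 s2, in_I a b s1 /\ in_I a b s2 /\ kappa al s1 <> kappa al s2) ->
  (forall s, in_I a b s -> 5 * (Derive (kappa al) s) ^ 2 = c2 - 2 * c1 / kappa al s + kappa al s ^ 4) ->
  forall s, in_I a b s -> Hh al c1 s = 0.
Proof.
  intros H [s1 [s2 [I1 [I2 Hne]]]] Hfi s0 Hs0. apply NNPP. intros Hn0.
  set (P := fun y => Dk al 0 y = Dk al 0 s0 /\ Hh al c1 y = Hh al c1 s0).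
  assert (Hpr := prodH al a b c1 c2 H Hfi).
  assert (Hop : forall x, in_I a b x -> P x -> locally x P).
  { intros x Ix [Px1 Px2].
    assert (L : locally x (fun y => in_I a b y /\ Hh al c1 y <> 0)).
    { apply filter_and. apply I_loc; auto. apply cont_neq. apply (cont_Hh al a b); auto. congruence. }
    destruct (loc_ball _ _ L) as [d [Hd Hb]].
    assert (D1z : forall y, Rabs (y - x) < d -> Dk al 1 y = 0).
    { intros y Hy. destruct (Hb y Hy) as [Iy Hy0]. generalize (Hpr y Iy). intros E.
      apply Rmult_integral in E. destruct E; auto. contradiction. }
    assert (D2z : forall y, Rabs (y - x) < d -> Dk al 2 y = 0).
    { intros y Hy. rewrite <- DkS. rewrite (Derive_ext_loc _ (fun _ => 0)). apply Derive_const.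
      apply (ball_loc y _ (d - Rabs (y - x))). lra. intros z Hz. apply D1z.
      replace (z - x) with ((z - y) + (y - x)) by ring. eapply Rle_lt_trans. apply Rabs_triang. lra. }
    apply (ball_loc x _ d); auto. intros y Hy.
    assert (Kyx : Dk al 0 y = Dk al 0 x).
    { destruct (MVT_gen (Dk al 0) x y (Dk al 1)) as [c [Hc Ec]].
      - intros z Hz. rewrite <- DkS. apply Derive_correct. apply (ex_Dk al a b).
        auto. apply (Hb z). unfold Rmin, Rmax in Hz. destruct (Rle_dec x y); apply Rabs_def1; 
        apply Rabs_def2 in Hy; lra.
      - intros z Hz. apply continuity_pt_filterlim. apply (cont_Dk al a b).
        auto. apply (Hb z). unfold Rmin, Rmax in Hz. destruct (Rle_dec x y); apply Rabs_def1; 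
        apply Rabs_def2 in Hy; lra.
      - rewrite D1z in Ec. lra. unfold Rmin, Rmax in Hc. destruct (Rle_dec x y); apply Rabs_def1; 
        apply Rabs_def2 in Hy; lra. }
    split. congruence.
    rewrite <- Px2. unfold Hh. rewrite (D2z y Hy), (D2z x). rewrite Kyx. ring.
    rewrite Rminus_eq_0, Rabs_R0. auto. }
  assert (Hcl : forall x, in_I a b x -> ~ P x -> locally x (fun y => ~ P y)).
  { intros x Ix Pn. unfold P in Pn. apply not_and_or in Pn. destruct Pn as [Pn|Pn].
    - apply (filter_imp (fun y => Dk al 0 y <> Dk al 0 s0)). unfold P; tauto.
      apply cont_neq; auto. apply (cont_Dk al a b); auto.
    - apply (filter_imp (fun y => Hh al c1 y <> Hh al c1 s0)). unfold P; tauto.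
      apply cont_neq; auto. apply (cont_Hh al a b); auto. }
  assert (P1 : P s1). apply (I_conn a b P Hop Hcl s0 s1); auto. unfold P; auto.
  assert (P2 : P s2). apply (I_conn a b P Hop Hcl s0 s2); auto. unfold P; auto.
  apply Hne. rewrite !Dk0. destruct P1, P2. congruence.
Qed.

Lemma tang_comp al a b c1 c2 : HYP al a b ->
  (exists s1 s2, in_I a b s1 /\ in_I a b s2 /\ kappa al s1 <> kappa al s2) ->
  (forall s, in_I a b s -> 5 * (Derive (kappa al) s) ^ 2 = c2 - 2 * c1 / kappa al s + kappa al s ^ 4) ->
  forall s, in_I a b s -> - 10 * Dk al 1 s * Dk al 2 s - 5 * Dk al 0 s * Dk al 3 s + 10 * Dk al 0 s ^ 3 * Dk al 1 s = 0.
Proof.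
  intros H Hnc Hfi s Hs.
  assert (Z := Hh_zero al a b c1 c2 H Hnc Hfi).
  generalize (k0_pos al a b s H Hs); intros P.
  assert (E: Derive (Hh al c1) s = 10 * Dk al 3 s + 4 * c1 * Dk al 1 s / Dk al 0 s ^ 3 - 12 * Dk al 0 s ^ 2 * Dk al 1 s).
  { apply is_derive_unique. unfold Hh. auto_derive. exk. nra. dk. field. lra. }
  rewrite (Derive_lconst a b _ 0) in E; auto.
  assert (Z0 := Z s Hs). unfold Hh in Z0.
  replace (- 10 * Dk al 1 s * Dk al 2 s - 5 * Dk al 0 s * Dk al 3 s + 10 * Dk al 0 s ^ 3 * Dk al 1 s)
   with (- (Dk al 0 s / 2) * (10 * Dk al 3 s + 4 * c1 * Dk al 1 s / Dk al 0 s ^ 3 - 12 * Dk al 0 s ^ 2 * Dk al 1 s)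
         - Dk al 1 s * (10 * Dk al 2 s - 2 * c1 / (Dk al 0 s * Dk al 0 s) - 4 * Dk al 0 s ^ 3)).
  rewrite <- E, Z0. ring. field. lra.
Qed.

Lemma kg_vec (t n : vec3) k : dot t t = 1 -> dot n n = 1 -> dot t n = 0 ->
  vadd (vscal 0 t) (vscal k n) = vscal k (cross (vscal (/ vnorm (cross t n)) (cross t n)) (vadd (vscal 1 t) (vscal 0 n))).
Proof.
  intros E1 E2 E3.
  assert (L: dot (cross t n) (cross t n) = dot t t * dot n n - dot t n ^ 2).
  { destruct t, n; unfold dot, cross; simpl; ring. }
  assert (V: vnorm (cross t n) = 1). { unfold vnorm. rewrite L, E1, E2, E3. replace (1 * 1 - 0 ^ 2) with 1 by ring. apply sqrt_1. }
  rewrite V, Rinv_1. destruct t as [t1 t2 t3], n as [n1 n2 n3]. unfold dot in *; simpl in *.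
  unfold vadd, vscal, cross; simpl. f_equal.
  - replace (0 * t1 + k * n1) with (k * (n1 * (t1 * t1 + t2 * t2 + t3 * t3) - t1 * (t1 * n1 + t2 * n2 + t3 * n3))) by (rewrite E1, E3; ring). ring.
  - replace (0 * t2 + k * n2) with (k * (n2 * (t1 * t1 + t2 * t2 + t3 * t3) - t2 * (t1 * n1 + t2 * n2 + t3 * n3))) by (rewrite E1, E3; ring). ring.
  - replace (0 * t3 + k * n3) with (k * (n3 * (t1 * t1 + t2 * t2 + t3 * t3) - t3 * (t1 * n1 + t2 * n2 + t3 * n3))) by (rewrite E1, E3; ring). ring.
Qed.

Theorem proposition3p2 (al : R -> vec3) (a b : Rbar) :
  smooth_on a b al ->
  (forall s, in_I a b s -> vnorm (dvec al s) = 1) ->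
  (forall s, in_I a b s -> kappa al s <> 0) ->
  (exists s1 s2, in_I a b s1 /\ in_I a b s2 /\ kappa al s1 <> kappa al s2) ->
  (exists c1 c2 : R, forall s, in_I a b s ->
     5 * (Derive (kappa al) s) ^ 2 = c2 - 2 * c1 / kappa al s + kappa al s ^ 4) ->
  (exists s1 s2, in_I a b s1 /\ in_I a b s2 /\ tau al s1 <> tau al s2) ->
  (forall s, in_I a b s ->
     Derive_n (kappa al) 4 s - 15 * kappa al s * (Derive (kappa al) s) ^ 2
     - 10 * kappa al s ^ 2 * Derive_n (kappa al) 2 s + kappa al s ^ 5
     - tau al s ^ 2 * (Derive_n (kappa al) 2 s - 2 * kappa al s ^ 3) = 0) ->
  triharmonic_on (ruled al) curve_s0 a b /\
  exists kg : R -> R,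
    (forall s, in_I a b s ->
       amb (ruled al) curve_s0 (covD (ruled al) curve_s0 (ctangent curve_s0)) s
       = vscal (kg s) (Jrot (ruled al) curve_s0 (amb (ruled al) curve_s0 (ctangent curve_s0) s) s)) /\
    (forall s, in_I a b s -> kg s = kappa al s) /\
    (exists s1 s2, in_I a b s1 /\ in_I a b s2 /\ kg s1 <> kg s2).
Proof.
  intros Hsm Hu Hk Hnc [c1 [c2 Hfi]] _ H4.
  assert (H : HYP al a b) by (split; [|split]; auto).
  split.
  - intros s Hs l.
    destruct (C1 al a b s H Hs) as [E11 E12].
    destruct (C2 al a b s H Hs) as [E21 E22].
    destruct (C3 al a b s H Hs) as [E31 E32].
    destruct (C5 al a b s H Hs) as [E51 E52].
    destruct (C0 s) as [E01 E02].
    unfold Rcurv, sum2.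
    change (curve_s0 i1 s) with s. change (curve_s0 i2 s) with 0.
    rewrite E11, E12, E21, E22, E31, E32, E01, E02.
    rewrite !Riem_diag, (Riem_anti _ l i1 i2).
    assert (T4 := H4 s Hs).
    change (Derive_n (kappa al) 4 s) with (Dk al 4 s) in T4.
    change (Derive_n (kappa al) 2 s) with (Dk al 2 s) in T4.
    change (Derive (kappa al) s) with (Dk al 1 s) in T4.
    change (kappa al s) with (Dk al 0 s) in T4.
    destruct l.
    + rewrite E51, (Riem1 al a b s H Hs).
      assert (Z := tang_comp al a b c1 c2 H Hnc Hfi s Hs). lra.
    + rewrite E52, (Riem2 al a b s H Hs). match type of T4 with ?e = 0 => transitivity e; [ring|exact T4] end.
  - exists (kappa al). split; [|split; auto].
    intros s Hs.
    destruct (C1 al a b s H Hs) as [E11 E12].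
    change (covD_n (ruled al) curve_s0 1 (ctangent curve_s0)) with (covD (ruled al) curve_s0 (ctangent curve_s0)) in E11, E12.
    destruct (C0 s) as [E01 E02].
    unfold amb, Jrot, nS.
    change (curve_s0 i1 s) with s. change (curve_s0 i2 s) with 0.
    rewrite E11, E12, E01, E02, (pd1_eq al a b s 0 H Hs), pd2_eq.
    rewrite <- Dk0.
    apply kg_vec; unfold dot; simpl.
    + generalize (F1 al a b s H Hs). intros E. rewrite <- E. ring.
    + apply (F4 al a b s H Hs).
    + generalize (F5 al a b s H Hs). intros E. match type of E with ?e = 0 => transitivity e; [ring|exact E] end.
Qed.
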